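(* $\beta^c_1<\sqrt{3/2}<\beta^c_0$.
   Context: $\mathbb{N}=\{0,1,2,\dots\}$. For $t\ge 0$ let $q(t)=\lfloor t+1\rfloor/2$ if $\lfloor t\rfloor$ is odd and $q(t)=t-\lfloor t\rfloor/2$ if $\lfloor t\rfloor$ is even, and $p(t)=t+1-q(t)$. For $\beta\ge1$ let $\hat\sigma(t,\beta)\in(0,1)$ be the unique solution $\sigma$ of $\frac{p(t)\sigma}{\sqrt{1-\sigma^2}}+\frac{q(t)\sigma}{\sqrt{\beta^2-\sigma^2}}=1$, and $l(t,\beta)=\frac{p(t)}{\sqrt{1-\hat\sigma^2}}+\frac{\beta^2q(t)}{\sqrt{\beta^2-\hat\sigma^2}}-t-\sqrt2$. For $k\in\mathbb{N}$, $\delta(k,\beta)=l(2k+2,\beta)-l(2k,\beta)$, and $\beta^c_k$ is the unique number in $(1,\sqrt2)$ with $\delta(k,\beta^c_k)=0$ (well defined since $\beta\mapsto\delta(k,\beta)$ is strictly increasing on $[1,\infty)$ with $\delta(k,1)<0<\delta(k,\sqrt2)$). *)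

(* Defs.v *)
From Stdlib Require Import Reals Lra ZArith ClassicalEpsilon.
Open Scope R_scope.

(* floor t, for real t: Int_part t = up t - 1 is the integer part (floor) *)
Definition floorR (t : R) : Z := Int_part t.

Definition q (t : R) : R :=
  if Z.odd (floorR t) then IZR (floorR (t + 1)) / 2
  else t - IZR (floorR t) / 2.

Definition p (t : R) : R := t + 1 - q t.

Definition is_sigma_hat (t beta s : R) : Prop :=
  0 < s < 1 /\
  p t * s / sqrt (1 - s ^ 2) + q t * s / sqrt (beta ^ 2 - s ^ 2) = 1.

(* the unique solution (chosen via Hilbert's epsilon; unique by the paper) *)
Definition sigma_hat (t beta : R) : R :=
  epsilon (inhabits 0) (is_sigma_hat t beta).

Definition l (t beta : R) : R :=
  let s := sigma_hat t beta in
  p t / sqrt (1 - s ^ 2) + beta ^ 2 * q t / sqrt (beta ^ 2 - s ^ 2) - t - sqrt 2.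

Definition delta (k : nat) (beta : R) : R :=
  l (2 * INR k + 2) beta - l (2 * INR k) beta.

Definition is_beta_c (k : nat) (b : R) : Prop :=
  1 < b < sqrt 2 /\ delta k b = 0.

Definition beta_c (k : nat) : R := epsilon (inhabits 0) (is_beta_c k).

(* Main.v *)
Require Import Defs.
From Stdlib Require Import Reals Lra Psatz ClassicalEpsilon Ranalysis5.
From Coquelicot Require Import Coquelicot.
Open Scope R_scope.

Lemma sqrt_le_r (x r : R) : 0 <= r -> x <= r * r -> sqrt x <= r.
Proof. intros H1 H2. rewrite <- (sqrt_square r H1). now apply sqrt_le_1_alt. Qed.

Lemma r_le_sqrt (x r : R) : 0 <= r -> r * r <= x -> r <= sqrt x.
Proof. intros H1 H2. rewrite <- (sqrt_square r H1). now apply sqrt_le_1_alt. Qed.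

Definition G (a b be s : R) := s + a * sqrt (1 - s^2) + b * sqrt (be^2 - s^2).
Definition isS (a b be s : R) := 0 < s < 1 /\
  a * s / sqrt (1 - s ^ 2) + b * s / sqrt (be ^ 2 - s ^ 2) = 1.

Lemma isS_exists a b be : 1 <= a -> 0 <= b -> 1 <= be -> exists s, isS a b be s.
Proof.
  intros Ha Hb Hbe.
  set (F := fun s => a * s / sqrt (1 - s ^ 2) + b * s / sqrt (be ^ 2 - s ^ 2) - 1).
  destruct (IVT_interv F 0 (4/5)) as [z [Hz Fz]].
  - intros x Hx. apply continuity_pt_filterlim.
    assert (HD : ex_derive F x); [|now apply ex_derive_continuous in HD].
    unfold F. auto_derive. repeat split.
    + nra.
    + apply Rgt_not_eq, sqrt_lt_R0. nra.
    + nra.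
    + apply Rgt_not_eq, sqrt_lt_R0. nra.
  - lra.
  - unfold F. replace (0^2) with 0 by ring. rewrite !Rmult_0_r, !Rdiv_0_l. lra.
  - unfold F.
    assert (H1 : sqrt (1 - (4/5)^2) <= 3/5) by (apply sqrt_le_r; lra).
    assert (H2 : 0 < sqrt (1 - (4/5)^2)) by (apply sqrt_lt_R0; lra).
    assert (H3 : 0 < sqrt (be^2 - (4/5)^2)) by (apply sqrt_lt_R0; nra).
    assert (H4 : 0 <= b * (4/5) / sqrt (be ^ 2 - (4/5) ^ 2)).
    { apply Rmult_le_pos; [nra| apply Rlt_le, Rinv_0_lt_compat; lra]. }
    assert (H5 : 4/3 <= a * (4/5) / sqrt (1 - (4/5)^2)).
    { apply Rmult_le_reg_r with (sqrt (1 - (4/5)^2)); auto. replace (a * (4/5) / sqrt (1 - (4/5)^2) * sqrt (1 - (4/5)^2)) with (a*(4/5)) by (field; lra). nra. }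
    lra.
  - exists z. unfold F in Fz. split; [|lra].
    destruct Hz as [Hz1 Hz2]. destruct Hz1 as [Hz1|Hz1]; [lra|].
    subst z. replace (0^2) with 0 in Fz by ring. rewrite !Rmult_0_r, !Rdiv_0_l in Fz. lra.
Qed.

Lemma isS_facts a b be s : 1 <= be -> isS a b be s ->
  0 < sqrt (1 - s^2) /\ 0 < sqrt (be^2 - s^2) /\
  sqrt (1 - s^2) * sqrt (1 - s^2) = 1 - s^2 /\
  sqrt (be^2 - s^2) * sqrt (be^2 - s^2) = be^2 - s^2.
Proof.
  intros Hbe [[H0 H1] _].
  repeat split; try apply sqrt_lt_R0; try apply sqrt_sqrt; nra.
Qed.

Lemma isS_val a b be s : 1 <= be -> isS a b be s ->
  a / sqrt (1 - s ^ 2) + be ^ 2 * b / sqrt (be ^ 2 - s ^ 2) = G a b be s.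
Proof.
  intros Hbe H. destruct (isS_facts a b be s Hbe H) as [HA [HB [HAA HBB]]].
  destruct H as [_ E]. unfold G.
  set (A := sqrt (1 - s^2)) in *. set (B := sqrt (be^2 - s^2)) in *.
  assert (E1 : a / A = a * A + s * (a * s / A)).
  { assert (T : a / A - (a * A + s * (a * s / A)) = a * (1 - s^2 - A*A) / A) by (field; lra).
    rewrite HAA in T. replace (a * (1 - s^2 - (1 - s^2)) / A) with 0 in T by (field; lra). lra. }
  assert (E2 : be^2 * b / B = b * B + s * (b * s / B)).
  { assert (T : be^2 * b / B - (b * B + s * (b * s / B)) = b * (be^2 - s^2 - B*B) / B) by (field; lra).
    rewrite HBB in T. replace (b * (be^2 - s^2 - (be^2 - s^2)) / B) with 0 in T by (field; lra). lra. }
  rewrite E1, E2. replace (s * (a * s / A)) with (s * (a*s/A + b*s/B) - s * (b*s/B)) by ring.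
  rewrite E. ring.
Qed.

Lemma sqrt_prod_le c u v : u^2 <= c -> v^2 <= c ->
  sqrt (c - u^2) * sqrt (c - v^2) <= c - u * v.
Proof.
  intros Hu Hv.
  assert (P1 := sqrt_pos (c - u^2)). assert (P2 := sqrt_pos (c - v^2)).
  assert (Q1 := sqrt_sqrt (c - u^2) ltac:(lra)). assert (Q2 := sqrt_sqrt (c - v^2) ltac:(lra)).
  assert (0 <= c - u * v) by (assert (0 <= (u-v)^2) by apply pow2_ge_0; nra).
  assert (X : (sqrt (c - u^2) * sqrt (c - v^2))^2 <= (c - u*v)^2).
  { replace ((sqrt (c - u^2) * sqrt (c - v^2))^2) with
     ((sqrt (c - u^2) * sqrt (c - u^2)) * (sqrt (c - v^2) * sqrt (c - v^2))) by ring.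
    rewrite Q1, Q2. assert (0 <= c*(u-v)^2) by (apply Rmult_le_pos; [nra|apply pow2_ge_0]). nra. }
  nra.
Qed.

Lemma isS_max a b be s s0 : 1 <= be -> 0 <= a -> 0 <= b -> isS a b be s ->
  0 <= s0 <= 1 -> G a b be s0 <= G a b be s.
Proof.
  intros Hbe Ha Hb H Hs0. rewrite <- (isS_val a b be s Hbe H).
  destruct (isS_facts a b be s Hbe H) as [HA [HB [HAA HBB]]].
  destruct H as [[Hs1 Hs2] E]. unfold G.
  assert (I1 := sqrt_prod_le 1 s0 s ltac:(nra) ltac:(nra)).
  assert (I2 := sqrt_prod_le (be^2) s0 s ltac:(nra) ltac:(nra)).
  set (A := sqrt (1 - s^2)) in *. set (B := sqrt (be^2 - s^2)) in *.
  set (A0 := sqrt (1 - s0^2)) in *. set (B0 := sqrt (be^2 - s0^2)) in *.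
  assert (J1 : a * A0 <= a / A - s0 * (a * s / A)).
  { replace (a / A - s0 * (a * s / A)) with (a * (1 - s0 * s) / A) by (field; lra).
    apply Rmult_le_reg_r with A; [lra|].
    replace (a * (1 - s0 * s) / A * A) with (a * (1 - s0*s)) by (field; lra). nra. }
  assert (J2 : b * B0 <= be^2 * b / B - s0 * (b * s / B)).
  { replace (be^2 * b / B - s0 * (b * s / B)) with (b * (be^2 - s0 * s) / B) by (field; lra).
    apply Rmult_le_reg_r with B; [lra|].
    replace (b * (be^2 - s0 * s) / B * B) with (b * (be^2 - s0*s)) by (field; lra). nra. }
  assert (s0 * (a * s / A) + s0 * (b * s / B) = s0) by (rewrite <- Rmult_plus_distr_l, E; ring).
  lra.
Qed.

Lemma sqrt_ub x c : 0 <= x -> 0 < c -> sqrt x <= (x / c + c) / 2.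
Proof.
  intros Hx Hc. assert (Q := sqrt_sqrt x Hx). assert (P := sqrt_pos x).
  apply Rmult_le_reg_r with (2*c); [lra|].
  replace ((x / c + c) / 2 * (2 * c)) with (x + c*c) by (field; lra).
  assert (0 <= (sqrt x - c)^2) by apply pow2_ge_0. nra.
Qed.

Lemma G_ub a b be s c1 c2 : 0 <= a -> 0 <= b -> 0 < c1 -> 0 < c2 -> s^2 <= 1 -> s^2 <= be^2 ->
  G a b be s <= s + a * ((1 - s^2)/c1 + c1)/2 + b * ((be^2 - s^2)/c2 + c2)/2.
Proof.
  intros. unfold G.
  assert (U1 := sqrt_ub (1 - s^2) c1 ltac:(lra) ltac:(lra)).
  assert (U2 := sqrt_ub (be^2 - s^2) c2 ltac:(lra) ltac:(lra)).
  nra.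
Qed.

Lemma G_lb a b be s0 r1 r2 : 0 <= a -> 0 <= b -> 0 <= r1 -> 0 <= r2 ->
  r1 * r1 <= 1 - s0^2 -> r2 * r2 <= be^2 - s0^2 -> s0 + a * r1 + b * r2 <= G a b be s0.
Proof.
  intros. unfold G.
  assert (r1 <= sqrt (1 - s0^2)) by (apply r_le_sqrt; lra).
  assert (r2 <= sqrt (be^2 - s0^2)) by (apply r_le_sqrt; lra).
  nra.
Qed.

Lemma isS_s_bound a b be s : 1 <= be -> 0 <= a -> 0 <= b -> isS a b be s -> s^2 * (1 + a^2) <= 1.
Proof.
  intros Hbe Ha Hb H. destruct (isS_facts a b be s Hbe H) as [HA [HB [HAA HBB]]].
  destruct H as [[Hs1 Hs2] E].
  set (A := sqrt (1 - s^2)) in *. set (B := sqrt (be^2 - s^2)) in *.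
  assert (0 <= b * s / B) by (apply Rmult_le_pos; [nra| apply Rlt_le, Rinv_0_lt_compat; lra]).
  assert (a * s / A <= 1) by lra.
  assert (a * s <= A) by (apply Rmult_le_reg_r with (/A); [apply Rinv_0_lt_compat; lra|];
     rewrite Rinv_r by lra; exact H0).
  assert (0 <= a * s) by nra.
  assert ((a*s)*(a*s) <= A * A) by nra. nra.
Qed.

Lemma floorR_IZR n : floorR (IZR n) = n.
Proof.
  unfold floorR, Int_part. rewrite <- (tech_up (IZR n) (n+1)).
  - ring.
  - rewrite plus_IZR. lra.
  - rewrite plus_IZR. lra.
Qed.

Lemma pq0 : p 0 = 1 /\ q 0 = 0.
Proof. unfold p, q. rewrite floorR_IZR. simpl. split; field. Qed.
Lemma pq2 : p 2 = 2 /\ q 2 = 1.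
Proof. unfold p, q. rewrite floorR_IZR. simpl. split; field. Qed.
Lemma pq4 : p 4 = 3 /\ q 4 = 2.
Proof. unfold p, q. rewrite floorR_IZR. simpl. split; field. Qed.

Definition M t be := G (p t) (q t) be (sigma_hat t be).

Lemma sigma_hat_spec t be : 1 <= p t -> 0 <= q t -> 1 <= be -> isS (p t) (q t) be (sigma_hat t be).
Proof.
  intros. unfold sigma_hat. apply (epsilon_spec (inhabits 0) (is_sigma_hat t be)).
  destruct (isS_exists (p t) (q t) be) as [s Hs]; auto. exists s. exact Hs.
Qed.

Lemma l_M t be : 1 <= p t -> 0 <= q t -> 1 <= be -> l t be = M t be - t - sqrt 2.
Proof.
  intros. unfold l, M. rewrite <- (isS_val _ _ _ _ H1 (sigma_hat_spec t be H H0 H1)). ring.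
Qed.

Lemma M0 be : 1 <= be -> M 0 be = sqrt 2.
Proof.
  intros Hbe. destruct pq0 as [P Q].
  assert (H := sigma_hat_spec 0 be ltac:(lra) ltac:(lra) Hbe).
  unfold M. rewrite P, Q in *. set (s := sigma_hat 0 be) in *.
  destruct (isS_facts _ _ _ _ Hbe H) as [HA [HB [HAA HBB]]].
  destruct H as [[H1 H2] E]. unfold G.
  set (A := sqrt (1 - s^2)) in *.
  assert (s = A).
  { rewrite Rmult_0_l, Rdiv_0_l, Rplus_0_r in E.
    apply Rmult_eq_reg_r with (/A); [|apply Rgt_not_eq, Rinv_0_lt_compat; lra].
    rewrite Rinv_r by lra. rewrite <- E. field. lra. }
  replace (s + 1 * A + 0 * sqrt (be ^ 2 - s ^ 2)) with (2 * s) by (rewrite <- H; ring).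
  rewrite <- (sqrt_square (2*s)) by lra. f_equal. rewrite <- H in HAA. nra.
Qed.

Lemma M_ub_gen a b be be2 s c1 c2 K : 1 <= be -> be^2 = be2 -> 0 <= a -> 0 <= b -> 0 < c1 -> 0 < c2 ->
  isS a b be s ->
  (forall s, 0 <= s <= 1 -> s + a*((1-s^2)/c1+c1)/2 + b*((be2-s^2)/c2+c2)/2 <= K) ->
  G a b be s <= K.
Proof.
  intros Hbe E Ha Hb H1 H2 H HK. destruct H as [[Hs1 Hs2] _].
  assert (s^2 <= 1) by nra. assert (1 <= be^2) by nra.
  eapply Rle_trans. apply (G_ub a b be s c1 c2); auto; lra. rewrite E. apply HK. lra.
Qed.

Lemma M_lb_gen a b be be2 s s0 r1 r2 : 1 <= be -> be^2 = be2 -> 0 <= a -> 0 <= b ->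
  isS a b be s -> 0 <= s0 <= 1 -> 0 <= r1 -> 0 <= r2 ->
  r1 * r1 <= 1 - s0^2 -> r2 * r2 <= be2 - s0^2 -> s0 + a * r1 + b * r2 <= G a b be s.
Proof.
  intros Hbe E Ha Hb H Hs0 Hr1 Hr2 R1 R2.
  eapply Rle_trans. apply G_lb; auto; rewrite E; auto.
  apply isS_max; auto.
Qed.

Lemma M2_eq be : 1 <= be -> M 2 be = G 2 1 be (sigma_hat 2 be) /\ isS 2 1 be (sigma_hat 2 be).
Proof.
  intros. destruct pq2 as [P Q].
  assert (S := sigma_hat_spec 2 be ltac:(lra) ltac:(lra) H). unfold M. rewrite P, Q in *. auto.
Qed.

Lemma M4_eq be : 1 <= be -> M 4 be = G 3 2 be (sigma_hat 4 be) /\ isS 3 2 be (sigma_hat 4 be).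
Proof.
  intros. destruct pq4 as [P Q].
  assert (S := sigma_hat_spec 4 be ltac:(lra) ltac:(lra) H). unfold M. rewrite P, Q in *. auto.
Qed.

Lemma M_mono t x y : 1 <= p t -> 0 <= q t -> 1 <= x <= y -> M t x <= M t y.
Proof.
  intros Hp Hq Hxy. unfold M.
  assert (Hx := sigma_hat_spec t x Hp Hq ltac:(lra)).
  assert (Hy := sigma_hat_spec t y Hp Hq ltac:(lra)).
  set (sx := sigma_hat t x) in *. set (sy := sigma_hat t y) in *.
  apply Rle_trans with (G (p t) (q t) y sx).
  - unfold G. destruct Hx as [[H1 H2] _].
    assert (sqrt (x^2 - sx^2) <= sqrt (y^2 - sx^2)) by (apply sqrt_le_1_alt; nra). nra.
  - destruct Hx as [[H1 H2] _]. apply isS_max; auto; lra.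
Qed.

Lemma sqrt_diff u v : 4/5 <= v <= u -> sqrt u - sqrt v <= u - v.
Proof.
  intros H. assert (Hv : 1/2 <= sqrt v) by (apply r_le_sqrt; lra).
  assert (sqrt v <= sqrt u) by (apply sqrt_le_1_alt; lra).
  assert (Qu := sqrt_sqrt u ltac:(lra)). assert (Qv := sqrt_sqrt v ltac:(lra)).
  assert (E : (sqrt u - sqrt v) * (sqrt u + sqrt v) = sqrt u * sqrt u - sqrt v * sqrt v) by ring.
  rewrite Qu, Qv in E.
  assert (0 <= (sqrt u - sqrt v) * (sqrt u + sqrt v - 1)) by (apply Rmult_le_pos; lra).
  assert ((sqrt u - sqrt v) * (sqrt u + sqrt v - 1) = (sqrt u - sqrt v) * (sqrt u + sqrt v) - (sqrt u - sqrt v)) by ring.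
  lra.
Qed.

Lemma M_lip t x y : 2 <= p t -> 0 <= q t <= 2 -> 1 <= x <= y -> y <= 3/2 ->
  M t y - M t x <= 6 * (y - x).
Proof.
  intros Hp Hq Hxy Hy. unfold M.
  assert (Hx' := sigma_hat_spec t x ltac:(lra) ltac:(lra) ltac:(lra)).
  assert (Hy' := sigma_hat_spec t y ltac:(lra) ltac:(lra) ltac:(lra)).
  assert (Bd := isS_s_bound (p t) (q t) y (sigma_hat t y) ltac:(lra) ltac:(lra) ltac:(lra) Hy').
  set (sx := sigma_hat t x) in *. set (sy := sigma_hat t y) in *.
  assert (sy^2 <= 1/5).
  { assert (0 <= sy^2) by apply pow2_ge_0. assert (4 <= p t ^2) by nra. nra. }
  assert (G (p t) (q t) x sy <= G (p t) (q t) x sx).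
  { destruct Hy' as [[H1 H2] _]. apply isS_max; auto; lra. }
  assert (sqrt (y^2 - sy^2) - sqrt (x^2 - sy^2) <= y^2 - x^2).
  { replace (y^2 - x^2) with ((y^2 - sy^2) - (x^2 - sy^2)) by ring. apply sqrt_diff. nra. }
  assert (q t * (sqrt (y^2 - sy^2) - sqrt (x^2 - sy^2)) <= q t * (y^2 - x^2)) by (apply Rmult_le_compat_l; lra).
  assert (q t * (y^2 - x^2) <= 6 * (y - x)).
  { replace (y^2 - x^2) with ((y - x) * (y + x)) by ring.
    assert (q t * (y + x) <= 6) by nra. nra. }
  unfold G in *. lra.
Qed.

Definition cl (x : R) := Rmax 1 (Rmin (3/2) x).

Lemma cl_range x : 1 <= cl x <= 3/2.
Proof. unfold cl, Rmax, Rmin. repeat destruct Rle_dec; lra. Qed.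

Lemma cl_id x : 1 <= x <= 3/2 -> cl x = x.
Proof. unfold cl, Rmax, Rmin. intros. repeat destruct Rle_dec; lra. Qed.

Lemma cl_lip x y : Rabs (cl x - cl y) <= Rabs (x - y).
Proof. unfold cl, Rmax, Rmin, Rabs. repeat destruct Rle_dec; repeat destruct Rcase_abs; lra. Qed.

Lemma Mcl_lip t x y : 2 <= p t -> 0 <= q t <= 2 -> Rabs (M t (cl x) - M t (cl y)) <= 6 * Rabs (x - y).
Proof.
  intros Hp Hq. assert (L := cl_lip x y). assert (Cx := cl_range x). assert (Cy := cl_range y).
  destruct (Rle_dec (cl x) (cl y)).
  - assert (M t (cl x) <= M t (cl y)) by (apply M_mono; lra).
    assert (M t (cl y) - M t (cl x) <= 6 * (cl y - cl x)) by (apply M_lip; lra).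
    revert L. unfold Rabs. repeat destruct Rcase_abs; intros; lra.
  - assert (M t (cl y) <= M t (cl x)) by (apply M_mono; lra).
    assert (M t (cl x) - M t (cl y) <= 6 * (cl x - cl y)) by (apply M_lip; lra).
    revert L. unfold Rabs. repeat destruct Rcase_abs; intros; lra.
Qed.

Lemma lip_cont f C x : 0 < C -> (forall y z, Rabs (f y - f z) <= C * Rabs (y - z)) -> continuity_pt f x.
Proof.
  intros HC Hf. unfold continuity_pt, continue_in, limit1_in, limit_in.
  intros eps Heps. exists (eps / C). split. apply Rdiv_lt_0_compat; lra.
  intros y [_ Hy]. simpl in *. unfold R_dist in *.
  eapply Rle_lt_trans. apply Hf.
  apply Rmult_lt_compat_l with (r := C) in Hy; auto.
  replace (C * (eps / C)) with eps in Hy by (field; lra). exact Hy.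
Qed.

Lemma Mcl_cont t x : 2 <= p t -> 0 <= q t <= 2 -> continuity_pt (fun y => M t (cl y)) x.
Proof. intros. apply lip_cont with 6. lra. intros. apply Mcl_lip; auto. Qed.
Lemma N1 : M 2 (sqrt (3/2)) <= (1698739/500000).
Proof.
  assert (Hb : 1 <= (sqrt (3/2))) by (apply r_le_sqrt; lra).
  destruct (M2_eq _ Hb) as [E S]. rewrite E.
  apply (M_ub_gen 2 1 (sqrt (3/2)) (3/2) _ (94173/100000) (23553/20000)); try lra; auto; try (apply pow2_sqrt; lra).
  intros s Hs. assert (H0 := pow2_ge_0 (s - (739352223/2198020000))). lra.
Qed.

Lemma N2 : (3593719/1000000) <= M 2 (sqrt 2).
Proof.
  assert (Hb : 1 <= (sqrt 2)) by (apply r_le_sqrt; lra).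
  destruct (M2_eq _ Hb) as [E S]. rewrite E.
  replace (3593719/1000000) with ((8729/25000) + 2 * (937063/1000000) + 1 * (1370433/1000000)) by lra.
  apply (M_lb_gen 2 1 (sqrt 2) 2); try lra; auto.
  all: try (apply pow2_sqrt; lra).
Qed.

Lemma N3a : M 4 1 <= (12747549/2500000).
Proof.
  assert (Hb : 1 <= 1) by (lra).
  destruct (M4_eq _ Hb) as [E S]. rewrite E.
  apply (M_ub_gen 3 2 1 1 _ (49029/50000) (49029/50000)); try lra; auto; try (apply pow2_sqrt; lra).
  intros s Hs. assert (H0 := pow2_ge_0 (s - (49029/250000))). lra.
Qed.

Lemma N3b : (790569/250000) <= M 2 1.
Proof.
  assert (Hb : 1 <= 1) by (lra).
  destruct (M2_eq _ Hb) as [E S]. rewrite E.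
  replace (790569/250000) with ((31623/100000) + 2 * (474341/500000) + 1 * (474341/500000)) by lra.
  apply (M_lb_gen 2 1 1 1); try lra; auto.
  all: try (apply pow2_sqrt; lra).
Qed.

Lemma N4l0 : (5556321/1000000) <= M 4 (sqrt (3/2)).
Proof.
  assert (Hb : 1 <= (sqrt (3/2))) by (apply r_le_sqrt; lra).
  destruct (M4_eq _ Hb) as [E S]. rewrite E.
  replace (5556321/1000000) with ((21153/100000) + 3 * (977371/1000000) + 2 * (1206339/1000000)) by lra.
  apply (M_lb_gen 3 2 (sqrt (3/2)) (3/2)); try lra; auto.
  all: try (apply pow2_sqrt; lra).
Qed.

Lemma N4u0 : M 2 (13/10) <= (34756073/10000000).
Proof.
  assert (Hb : 1 <= (13/10)) by (lra).
  destruct (M2_eq _ Hb) as [E S]. rewrite E.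
  apply (M_ub_gen 2 1 (13/10) (169/100) _ (11747/12500) (62713/50000)); try lra; auto; try (apply pow2_sqrt; lra).
  intros s Hs. assert (H0 := pow2_ge_0 (s - (43334683/126775000))). lra.
Qed.

Lemma N4l1 : (2854519/500000) <= M 4 (13/10).
Proof.
  assert (Hb : 1 <= (13/10)) by (lra).
  destruct (M4_eq _ Hb) as [E S]. rewrite E.
  replace (2854519/500000) with ((10793/50000) + 3 * (122053/125000) + 2 * (1281953/1000000)) by lra.
  apply (M_lb_gen 3 2 (13/10) (169/100)); try lra; auto.
  all: try (apply pow2_sqrt; lra).
Qed.

Lemma N4u1 : M 2 (14/10) <= (35790483/10000000).
Proof.
  assert (Hb : 1 <= (14/10)) by (lra).
  destruct (M2_eq _ Hb) as [E S]. rewrite E.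
  apply (M_ub_gen 2 1 (14/10) (49/25) _ (46869/50000) (67799/50000)); try lra; auto; try (apply pow2_sqrt; lra).
  intros s Hs. assert (H0 := pow2_ge_0 (s - (3177671331/9123350000))). lra.
Qed.

Lemma N4l2 : (5911713/1000000) <= M 4 (14/10).
Proof.
  assert (Hb : 1 <= (14/10)) by (lra).
  destruct (M4_eq _ Hb) as [E S]. rewrite E.
  replace (5911713/1000000) with ((2211/10000) + 3 * (975251/1000000) + 2 * (138243/100000)) by lra.
  apply (M_lb_gen 3 2 (14/10) (49/25)); try lra; auto.
  all: try (apply pow2_sqrt; lra).
Qed.

Lemma N4u2 : M 2 (sqrt 2) <= (7187439/2000000).
Proof.
  assert (Hb : 1 <= (sqrt 2)) by (apply r_le_sqrt; lra).
  destruct (M2_eq _ Hb) as [E S]. rewrite E.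
  apply (M_ub_gen 2 1 (sqrt 2) 2 _ (46853/50000) (137043/100000)); try lra; auto; try (apply pow2_sqrt; lra).
  intros s Hs. assert (H0 := pow2_ge_0 (s - (6420875679/18389600000))). lra.
Qed.

Lemma s2lo : 141421356/100000000 <= sqrt 2.
Proof. apply r_le_sqrt; lra. Qed.
Lemma s2hi : sqrt 2 <= 141421357/100000000.
Proof. apply sqrt_le_r; lra. Qed.
Lemma s15lo : 12247/10000 <= sqrt (3/2).
Proof. apply r_le_sqrt; lra. Qed.
Lemma s15hi : sqrt (3/2) <= 12248/10000.
Proof. apply sqrt_le_r; lra. Qed.

Lemma delta0_eq x : 1 <= x -> delta 0 x = M 2 x - 2 - sqrt 2.
Proof.
  intros Hx. unfold delta.
  replace (2 * INR 0 + 2) with 2 by (simpl; ring).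
  replace (2 * INR 0) with 0 by (simpl; ring).
  destruct pq0 as [P0 Q0]. destruct pq2 as [P2 Q2].
  rewrite (l_M 2), (l_M 0), M0; try lra.
Qed.

Lemma delta1_eq x : 1 <= x -> delta 1 x = M 4 x - M 2 x - 2.
Proof.
  intros Hx. unfold delta.
  replace (2 * INR 1 + 2) with 4 by (simpl; ring).
  replace (2 * INR 1) with 2 by (simpl; ring).
  destruct pq4 as [P0 Q0]. destruct pq2 as [P2 Q2].
  rewrite (l_M 2), (l_M 4); try lra.
Qed.

Lemma cont_sub f g : continuity f -> continuity g -> continuity (fun x => f x - g x).
Proof. intros Hf Hg x. apply continuity_pt_minus; auto. Qed.

Lemma cont_M2 : continuity (fun y => M 2 (cl y)).
Proof. intro x. destruct pq2 as [P Q]. apply Mcl_cont; lra. Qed.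
Lemma cont_M4 : continuity (fun y => M 4 (cl y)).
Proof. intro x. destruct pq4 as [P Q]. apply Mcl_cont; lra. Qed.
Lemma cont_c (c : R) : continuity (fun _ => c).
Proof. intro x. apply continuity_pt_const. intros a b; reflexivity. Qed.

Lemma mono2 x y : 1 <= x <= y -> M 2 x <= M 2 y.
Proof. destruct pq2 as [P Q]. intros; apply M_mono; lra. Qed.
Lemma mono4 x y : 1 <= x <= y -> M 4 x <= M 4 y.
Proof. destruct pq4 as [P Q]. intros; apply M_mono; lra. Qed.

Lemma exists0 : exists b, is_beta_c 0 b.
Proof.
  assert (A1 := s2lo). assert (A2 := s2hi). assert (A3 := s15lo). assert (A4 := s15hi).
  assert (B1 := N1). assert (B2 := N2).
  destruct (IVT (fun y => M 2 (cl y) - 2 - sqrt 2) (sqrt (3/2)) (sqrt 2)) as [z [Hz Fz]].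
  - apply cont_sub; [apply cont_sub|]; [apply cont_M2| apply cont_c | apply cont_c].
  - lra.
  - simpl. rewrite cl_id by lra. lra.
  - simpl. rewrite cl_id by lra. lra.
  - simpl in Fz. rewrite cl_id in Fz by lra.
    exists z. split.
    + split; [lra|]. destruct Hz as [_ [Hz|Hz]]; auto. subst z. lra.
    + rewrite delta0_eq by lra. exact Fz.
Qed.

Lemma exists1 : exists b, is_beta_c 1 b.
Proof.
  assert (A1 := s2lo). assert (A2 := s2hi). assert (A3 := s15lo). assert (A4 := s15hi).
  assert (B1 := N3a). assert (B2 := N3b). assert (B3 := N4l0). assert (B4 := N4u0).
  assert (B5 := mono2 (sqrt (3/2)) (13/10) ltac:(lra)).
  destruct (IVT (fun y => M 4 (cl y) - M 2 (cl y) - 2) 1 (sqrt (3/2))) as [z [Hz Fz]].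
  - apply cont_sub; [apply cont_sub|]; [apply cont_M4| apply cont_M2 | apply cont_c].
  - lra.
  - simpl. rewrite cl_id by lra. lra.
  - simpl. rewrite cl_id by lra. lra.
  - simpl in Fz. rewrite cl_id in Fz by lra.
    exists z. split.
    + split; [|lra]. destruct Hz as [[Hz|Hz] _]; auto. subst z. lra.
    + rewrite delta1_eq by lra. exact Fz.
Qed.

Theorem lemma3p14 : beta_c 1 < sqrt (3 / 2) < beta_c 0.
Proof.
  assert (A1 := s2lo). assert (A2 := s2hi). assert (A3 := s15lo). assert (A4 := s15hi).
  assert (H0 := epsilon_spec (inhabits 0) (is_beta_c 0) exists0).
  assert (H1 := epsilon_spec (inhabits 0) (is_beta_c 1) exists1).
  fold (beta_c 0) in H0. fold (beta_c 1) in H1.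
  destruct H0 as [R0 D0]. destruct H1 as [R1 D1].
  rewrite delta0_eq in D0 by lra. rewrite delta1_eq in D1 by lra.
  split.
  - apply Rnot_le_lt. intro Hb.
    assert (L0 := N4l0). assert (L1 := N4l1). assert (L2 := N4l2).
    assert (U0 := N4u0). assert (U1 := N4u1). assert (U2 := N4u2).
    set (b := beta_c 1) in *.
    destruct (Rle_dec b (13/10)).
    + assert (M 4 (sqrt (3/2)) <= M 4 b) by (apply mono4; lra).
      assert (M 2 b <= M 2 (13/10)) by (apply mono2; lra). lra.
    + destruct (Rle_dec b (14/10)).
      * assert (M 4 (13/10) <= M 4 b) by (apply mono4; lra).
        assert (M 2 b <= M 2 (14/10)) by (apply mono2; lra). lra.
      * assert (M 4 (14/10) <= M 4 b) by (apply mono4; lra).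
        assert (M 2 b <= M 2 (sqrt 2)) by (apply mono2; lra). lra.
  - apply Rnot_le_lt. intro Hb. assert (B1 := N1).
    assert (M 2 (beta_c 0) <= M 2 (sqrt (3/2))) by (apply mono2; lra). lra.
Qed.
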